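(* Assume $n_i(1)+n_i(0)>0$ for every link $i$. A point $\xi\in\Xi$ satisfies $\partial L(\xi)/\partial\xi=0$ if and only if, for every link $i\in E$, $$\xi_i=(1-r_i)+r_i\cdot\mathbf 1(i\notin\mathscr S)\cdot\prod_{j\in B_i}\xi_j .$$ In particular $\xi_i=1-r_i$ for $i\in\mathscr S$, and for a non-root link $i$, $\pi_i:=\prod_{j\in B_i}\xi_j$ satisfies $\pi_i=\prod_{j\in B_i}\big[(1-r_j)+r_j\pi_i\big]$.
   Context: Network: a finite set of directed links $E=\{1,\dots,m\}$ between nodes, forming a directed acyclic graph. For a link $i$, $C_i$ is the set of links whose tail is the head of $i$ (child links); $B_i$ is the set of links having the same tail as $i$ (brother links, including $i$ itself); $F_i$ is the set of links whose head is the tail of $i$ (parent links). A link $i$ is a leaf link if $C_i=\emptyset$; $R_i$ is the set of leaf links that are descendants of $i$ (including $i$ itself if $i$ is a leaf). The network is covered by $K\ge1$ multicast trees $T_1,\dots,T_K$: $T_k$ has a root link $S_k$ whose tail is a source node with no incoming link ($F_{S_k}=\emptyset$); its link set $E_k$ consists of $S_k$ and all descendants of $S_k$; every link $i\in E_k\setminus\{S_k\}$ has exactly one parent link in $E_k$, denoted $f^{(k)}_i\in F_i\cap E_k$; every link belongs to some $E_k$; each root link $S_k$ belongs only to $E_k$. $\mathscr S=\{S_1,\dots,S_K\}$. Loss model: each link $i$ has loss rate $\theta_i\in(0,1)$. From the source of tree $T_k$, $n_k$ probes are sent; $X^{(k,t)}_i=1$ if probe $t$ of tree $k$ reached the head of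 link $i\in E_k$; a probe at the tail of link $i$ traverses it with probability $1-\theta_i$, independently across links, probes and trees; only leaf links are observed. Internal views: $Y^{(k,t)}_i=\max_{r\in R_i}X^{(k,t)}_r$ for $i\in E_k$; $n_{k,i}(1)=\sum_{t=1}^{n_k}Y^{(k,t)}_i$ for $i\in E_k$ and $0$ otherwise; $n_{k,S_k}(0)=n_k-n_{k,S_k}(1)$, $n_{k,i}(0)=n_{k,f^{(k)}_i}(1)-n_{k,i}(1)$ for $i\in E_k\setminus\{S_k\}$, and $0$ for $i\notin E_k$; $n_i(1)=\sum_k n_{k,i}(1)$, $n_i(0)=\sum_k n_{k,i}(0)$; $r_i=n_i(1)/(n_i(1)+n_i(0))$. $\Xi$ is the set of $\xi\in(0,1)^m$ with $\xi_i>\prod_{j\in C_i}\xi_j$ for every non-leaf link $i$, and the log-likelihood of the observed data in terms of $\xi\in\Xi$ is $L(\xi)=\sum_{i\in E}\big[n_i(1)\log\frac{1-\xi_i}{1-\prod_{j\in C_i}\xi_j}+n_i(0)\log\xi_i\big]$, with the empty product over $C_i=\emptyset$ equal to $0$. *)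

(* Defs.v *)
From Stdlib Require Import Reals List Arith Relations ClassicalEpsilon.
Import ListNotations.
Open Scope R_scope.

Definition sumR (n : nat) (f : nat -> R) : R := fold_right Rplus 0 (map f (seq 0 n)).
Definition prodR (n : nat) (f : nat -> R) : R := fold_right Rmult 1 (map f (seq 0 n)).

Definition ind (P : Prop) : R :=
  if excluded_middle_informative P then 1 else 0.

(* Network structure: links are 0..m-1 (the paper's 1..m), with tail/head
   nodes (nodes are nats); K trees with root links S k (k < K); par k i is
   the parent link f^{(k)}_i of i in tree k. *)
Record Net := mkNet {
  m : nat;
  ltail : nat -> nat;
  lhead : nat -> nat;
  K : nat;
  S : nat -> nat;
  par : nat -> nat -> nat
}.

Section NetDefs.
Variable N : Net.

Definition child (i j : nat) : Prop := (i < m N)%nat /\ (j < m N)%nat /\ ltail N j = lhead N i.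

Definition desc_eq : nat -> nat -> Prop := clos_refl_trans nat child.

Definition leafb (i : nat) : bool :=
  forallb (fun j => negb (Nat.eqb (ltail N j) (lhead N i))) (seq 0 (m N)).

Definition inE (k i : nat) : Prop := desc_eq (S N k) i.

Definition isRoot (i : nat) : bool := existsb (fun k => Nat.eqb (S N k) i) (seq 0 (K N)).

Definition valid_net : Prop :=
  (forall i, ~ clos_trans nat child i i) /\
  (1 <= K N)%nat /\
  (forall k, (k < K N)%nat -> (S N k < m N)%nat) /\
  (forall k j, (k < K N)%nat -> (j < m N)%nat -> lhead N j <> ltail N (S N k)) /\
  (forall k i, (k < K N)%nat -> inE k i -> i <> S N k ->
      ((par N k i < m N)%nat /\ lhead N (par N k i) = ltail N i /\ inE k (par N k i)) /\
      (forall g, (g < m N)%nat -> lhead N g = ltail N i -> inE k g -> g = par N k i)) /\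
  (forall i, (i < m N)%nat -> exists k, (k < K N)%nat /\ inE k i) /\
  (forall k l, (k < K N)%nat -> (l < K N)%nat -> inE l (S N k) -> l = k).

Variable nprobe : nat -> nat.
Variable X : nat -> nat -> nat -> bool.  (* X k t r : probe t of tree k reached head of r *)

Definition Y (k t i : nat) : R :=
  ind (exists r, (r < m N)%nat /\ leafb r = true /\ desc_eq i r /\ X k t r = true).

Definition nk1 (k i : nat) : R :=
  if excluded_middle_informative (inE k i)
  then sumR (nprobe k) (fun t => Y k t i) else 0.

Definition nk0 (k i : nat) : R :=
  if excluded_middle_informative (inE k i)
  then (if Nat.eqb i (S N k) then INR (nprobe k) - nk1 k i
        else nk1 k (par N k i) - nk1 k i)
  else 0.

Definition n1 (i : nat) : R := sumR (K N) (fun k => nk1 k i).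
Definition n0 (i : nat) : R := sumR (K N) (fun k => nk0 k i).
Definition rr (i : nat) : R := n1 i / (n1 i + n0 i).

Definition prodB (xi : nat -> R) (i : nat) : R :=
  prodR (m N) (fun j => if Nat.eqb (ltail N j) (ltail N i) then xi j else 1).

(* prod_{j in C_i} xi_j, with the empty product (leaf) equal to 0 *)
Definition prodC (xi : nat -> R) (i : nat) : R :=
  if leafb i then 0
  else prodR (m N) (fun j => if Nat.eqb (ltail N j) (lhead N i) then xi j else 1).

Definition InXi (xi : nat -> R) : Prop :=
  forall i, (i < m N)%nat ->
    0 < xi i < 1 /\ (leafb i = false -> xi i > prodC xi i).

Definition loglik (xi : nat -> R) : R :=
  sumR (m N) (fun i => n1 i * ln ((1 - xi i) / (1 - prodC xi i)) + n0 i * ln (xi i)).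

Definition upd (xi : nat -> R) (i : nat) (x : R) : nat -> R :=
  fun j => if Nat.eqb j i then x else xi j.

Definition stationary (xi : nat -> R) : Prop :=
  forall i, (i < m N)%nat -> derivable_pt_lim (fun x => loglik (upd xi i x)) (xi i) 0.

End NetDefs.

(* Main.v *)
From Coquelicot Require Import Coquelicot.
Require Import Defs.
From Stdlib Require Import Reals List Arith Relations Lra Lia FunctionalExtensionality ClassicalEpsilon Classical.
Import ListNotations.
Open Scope R_scope.

Lemma sumR_S n f : sumR (Datatypes.S n) f = sumR n f + f n.
Proof. unfold sumR. rewrite seq_S, map_app, fold_right_app. simpl.
  generalize (f n). induction (map f (seq 0 n)); intros; simpl; [lra|]. rewrite IHl. lra. Qed.
Lemma prodR_S n f : prodR (Datatypes.S n) f = prodR n f * f n.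
Proof. unfold prodR. rewrite seq_S, map_app, fold_right_app. simpl.
  generalize (f n). induction (map f (seq 0 n)); intros; simpl; [lra|]. rewrite IHl. lra. Qed.
Lemma sumR_0 f : sumR 0 f = 0. Proof. reflexivity. Qed.
Lemma prodR_0 f : prodR 0 f = 1. Proof. reflexivity. Qed.

Lemma sumR_ext n f g : (forall j, (j < n)%nat -> f j = g j) -> sumR n f = sumR n g.
Proof. induction n; intros H; [reflexivity|]. rewrite !sumR_S, IHn by (intros; apply H; lia).
  rewrite H by lia. reflexivity. Qed.
Lemma prodR_ext n f g : (forall j, (j < n)%nat -> f j = g j) -> prodR n f = prodR n g.
Proof. induction n; intros H; [reflexivity|]. rewrite !prodR_S, IHn by (intros; apply H; lia).
  rewrite H by lia. reflexivity. Qed.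

Lemma sumR_plus n f g : sumR n (fun j => f j + g j) = sumR n f + sumR n g.
Proof. induction n; [simpl; unfold sumR; simpl; lra|]. rewrite !sumR_S, IHn. lra. Qed.
Lemma sumR_scal n c f : sumR n (fun j => c * f j) = c * sumR n f.
Proof. induction n; [unfold sumR; simpl; lra|]. rewrite !sumR_S, IHn. lra. Qed.
Lemma sumR_zero n f : (forall j, (j < n)%nat -> f j = 0) -> sumR n f = 0.
Proof. induction n; intros H; [reflexivity|]. rewrite sumR_S, IHn, H by (try intros; try apply H; lia). lra. Qed.
Lemma sumR_delta n i f : (i < n)%nat -> sumR n (fun j => if Nat.eqb j i then f j else 0) = f i.
Proof. induction n; intros H; [lia|]. rewrite sumR_S. destruct (Nat.eq_dec i n).
  - subst. rewrite Nat.eqb_refl. rewrite sumR_zero; [lra|]. intros j Hj.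
    destruct (Nat.eqb_spec j n); [lia|auto].
  - rewrite IHn by lia. destruct (Nat.eqb_spec n i); [lia|lra]. Qed.
Lemma sumR_swap n k f : sumR n (fun l => sumR k (fun j => f j l)) = sumR k (fun j => sumR n (fun l => f j l)).
Proof. induction n; [rewrite sumR_0, sumR_zero; [reflexivity|]; intros; reflexivity|].
  rewrite sumR_S, IHn, <- sumR_plus. apply sumR_ext. intros. rewrite sumR_S. reflexivity. Qed.

Lemma prodR_pick n i f : (i < n)%nat -> prodR n f = f i * prodR n (fun j => if Nat.eqb j i then 1 else f j).
Proof. induction n; intros H; [lia|]. rewrite !prodR_S. destruct (Nat.eq_dec i n).
  - subst. rewrite Nat.eqb_refl. rewrite (prodR_ext n (fun j => if Nat.eqb j n then 1 else f j) f); [lra|].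
    intros j Hj. destruct (Nat.eqb_spec j n); [lia|auto].
  - rewrite IHn by lia. destruct (Nat.eqb_spec n i); [lia|lra]. Qed.

Lemma prodR_bounds n f : (forall j, (j < n)%nat -> 0 < f j <= 1) -> 0 < prodR n f <= 1.
Proof. induction n; intros H; [unfold prodR; simpl; lra|]. rewrite prodR_S.
  destruct IHn as [A B]; [intros; apply H; lia|]. destruct (H n) as [C D]; [lia|].
  split; [apply Rmult_lt_0_compat; lra|]. rewrite <- (Rmult_1_r 1). apply Rmult_le_compat; lra. Qed.

Lemma is_derive_sumR n (g : nat -> R -> R) d x :
  (forall l, (l < n)%nat -> is_derive (g l) x (d l)) ->
  is_derive (fun y => sumR n (fun l => g l y)) x (sumR n d).
Proof. induction n; intros H.
  - unfold sumR; simpl. apply (is_derive_const 0).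
  - rewrite sumR_S. apply (is_derive_ext (fun y => plus (sumR n (fun l => g l y)) (g n y))).
    { intros; rewrite sumR_S; reflexivity. }
    apply (is_derive_plus _ _ _ (sumR n d) (d n)). apply IHn; intros; apply H; lia. apply H; lia. Qed.

Lemma der_self a b c x : 0 < x < 1 -> c < 1 ->
  is_derive (fun x => a * ln ((1 - x)/(1-c)) + b * ln x) x (- a / (1 - x) + b / x).
Proof. intros Hx Hc. auto_derive.
  - split; [|split; [lra|auto]]. apply Rdiv_lt_0_compat; lra.
  - field. lra. Qed.
Lemma der_par a b c Q x : c < 1 -> x * Q < 1 ->
  is_derive (fun x => a * ln ((1 - c)/(1-x * Q)) + b) x (a * (Q / (1 - x * Q))).
Proof. intros Hc Hx. auto_derive.
  - repeat split; try lra. apply Rdiv_lt_0_compat; lra.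
  - field. lra. Qed.

Lemma no_self N i : valid_net N -> (i < m N)%nat -> lhead N i <> ltail N i.
Proof. intros [Hac _] Hi E. apply (Hac i). apply t_step. unfold child. auto. Qed.

Definition Qv N xi i := prodR (m N) (fun j => if Nat.eqb j i then 1 else if Nat.eqb (ltail N j) (ltail N i) then xi j else 1).

Lemma Qv_bounds N xi i : InXi N xi -> 0 < Qv N xi i <= 1.
Proof. intros H. apply prodR_bounds. intros j Hj. destruct (Nat.eqb j i); [lra|].
  destruct (Nat.eqb (ltail N j) (ltail N i)); [|lra]. destruct (H j Hj) as [[A B] _]. lra. Qed.

Lemma prodB_Qv N xi i : (i < m N)%nat -> prodB N xi i = xi i * Qv N xi i.
Proof. intros Hi. unfold prodB. rewrite (prodR_pick _ i) by auto. rewrite Nat.eqb_refl. reflexivity. Qed.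

Lemma prodC_lt1 N xi l : InXi N xi -> (l < m N)%nat -> prodC N xi l < 1.
Proof. intros H Hl. destruct (leafb N l) eqn:E.
  - unfold prodC. rewrite E. lra.
  - destruct (H l Hl) as [[A B] C]. specialize (C E). lra. Qed.

Lemma leafb_false N l i : (i < m N)%nat -> ltail N i = lhead N l -> leafb N l = false.
Proof. intros Hi E. unfold leafb. apply Bool.not_true_iff_false. intros F.
  rewrite forallb_forall in F. specialize (F i). rewrite in_seq in F.
  rewrite E, Nat.eqb_refl in F. simpl in F. discriminate F; lia. Qed.

Definition term N nprobe X xi l := n1 N nprobe X l * ln ((1 - xi l) / (1 - prodC N xi l)) + n0 N nprobe X l * ln (xi l).

Definition dterm N nprobe X xi i l :=
  (if Nat.eqb l i then (- n1 N nprobe X i / (1 - xi i) + n0 N nprobe X i / xi i) else 0)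
  + (if Nat.eqb (lhead N l) (ltail N i) then n1 N nprobe X l * (Qv N xi i / (1 - xi i * Qv N xi i)) else 0).

Lemma prodC_upd_same N xi i x l : lhead N l <> ltail N i -> prodC N (upd xi i x) l = prodC N xi l.
Proof. intros H. unfold prodC. destruct (leafb N l); auto. apply prodR_ext. intros j _.
  unfold upd. destruct (Nat.eqb_spec j i); auto. subst. destruct (Nat.eqb_spec (ltail N i) (lhead N l)); auto.
  congruence. Qed.

Lemma prodC_upd_par N xi i x l : (i < m N)%nat -> lhead N l = ltail N i -> prodC N (upd xi i x) l = x * Qv N xi i.
Proof. intros Hi H. unfold prodC. rewrite (leafb_false N l i) by auto.
  rewrite (prodR_pick _ i) by auto. rewrite H, Nat.eqb_refl. unfold upd at 1. rewrite Nat.eqb_refl. f_equal.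
  apply prodR_ext. intros j _. unfold upd. destruct (Nat.eqb_spec j i); auto. Qed.

Lemma term_der N nprobe X xi i l : valid_net N -> InXi N xi -> (i < m N)%nat -> (l < m N)%nat ->
  is_derive (fun x => term N nprobe X (upd xi i x) l) (xi i) (dterm N nprobe X xi i l).
Proof. intros HN Hxi Hi Hl. unfold dterm, term. destruct (Nat.eqb_spec l i) as [Hli|Hli].
  - subst l. pose proof (no_self N i HN Hi) as Hns.
    destruct (Nat.eqb_spec (lhead N i) (ltail N i)) as [Hq|Hq]; [congruence|]. rewrite Rplus_0_r.
    apply (is_derive_ext (fun x => n1 N nprobe X i * ln ((1 - x)/(1 - prodC N xi i)) + n0 N nprobe X i * ln x)).
    { intros t. rewrite prodC_upd_same by auto. unfold upd. rewrite Nat.eqb_refl. reflexivity. }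
    apply der_self. destruct (Hxi i Hi); auto. apply prodC_lt1; auto.
  - rewrite Rplus_0_l. assert (Hu: forall x, upd xi i x l = xi l) by (intros; unfold upd; destruct (Nat.eqb_spec l i); congruence).
    destruct (Nat.eqb_spec (lhead N l) (ltail N i)) as [Hp|Hp].
    + apply (is_derive_ext (fun x => n1 N nprobe X l * ln ((1 - xi l)/(1 - x * Qv N xi i)) + n0 N nprobe X l * ln (xi l))).
      { intros t. rewrite prodC_upd_par, Hu by auto. reflexivity. }
      apply der_par. destruct (Hxi l Hl) as [[A B] _]; lra.
      destruct (Hxi i Hi) as [[A B] _]. destruct (Qv_bounds N xi i Hxi).
      assert (xi i * Qv N xi i <= xi i * 1) by (apply Rmult_le_compat_l; lra). lra.
    + apply (is_derive_ext (fun _ => n1 N nprobe X l * ln ((1 - xi l)/(1 - prodC N xi l)) + n0 N nprobe X l * ln (xi l))).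
      { intros t. rewrite prodC_upd_same, Hu by auto. reflexivity. }
      apply (is_derive_const (V:=R_NormedModule)). Qed.

Lemma isRoot_spec N i : isRoot N i = true <-> exists k, (k < K N)%nat /\ S N k = i.
Proof. unfold isRoot. rewrite existsb_exists. split.
  - intros [k [H1 H2]]. rewrite in_seq in H1. apply Nat.eqb_eq in H2. exists k. split; [lia|auto].
  - intros [k [H1 H2]]. exists k. rewrite in_seq. split; [lia|]. apply Nat.eqb_eq; auto. Qed.

Lemma inner N nprobe X i k : valid_net N -> (i < m N)%nat -> (k < K N)%nat ->
  sumR (m N) (fun l => if Nat.eqb (lhead N l) (ltail N i) then nk1 N nprobe X k l else 0) =
  if excluded_middle_informative (inE N k i /\ i <> S N k) then nk1 N nprobe X k (par N k i) else 0.
Proof. intros HN Hi Hk. pose proof HN as HN'.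
  destruct HN as [Hac [HK [HSm [Hsrc [Hpar [Hcov Huniq]]]]]].
  destruct (excluded_middle_informative (inE N k i /\ i <> S N k)) as [[Hin Hne]|Hno].
  - destruct (Hpar k i Hk Hin Hne) as [[Hpm [Hph Hpin]] Hpu].
    rewrite <- (sumR_delta (m N) (par N k i) (fun l => nk1 N nprobe X k l)) by auto.
    apply sumR_ext. intros l Hl. destruct (Nat.eqb_spec l (par N k i)) as [E|E].
    + subst l. rewrite Hph, Nat.eqb_refl. reflexivity.
    + destruct (Nat.eqb_spec (lhead N l) (ltail N i)) as [E2|E2]; auto.
      unfold nk1. destruct (excluded_middle_informative (inE N k l)) as [Hl'|Hl']; auto.
      exfalso. apply E. apply Hpu; auto.
  - apply sumR_zero. intros l Hl. destruct (Nat.eqb_spec (lhead N l) (ltail N i)) as [E2|E2]; auto.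
    unfold nk1. destruct (excluded_middle_informative (inE N k l)) as [Hl'|Hl']; auto.
    exfalso. assert (Hin : inE N k i).
    { unfold inE, desc_eq in *. eapply rt_trans; [apply Hl'|]. apply rt_step. unfold child. auto. }
    assert (i = S N k) by (destruct (Nat.eq_dec i (S N k)); auto; exfalso; apply Hno; auto).
    subst i. apply (Hsrc k l Hk Hl E2). Qed.

Lemma A_formula N nprobe X i : valid_net N -> (i < m N)%nat ->
  sumR (m N) (fun l => if Nat.eqb (lhead N l) (ltail N i) then n1 N nprobe X l else 0) =
  if isRoot N i then 0 else n1 N nprobe X i + n0 N nprobe X i.
Proof. intros HN Hi.
  transitivity (sumR (K N) (fun k => sumR (m N) (fun l => if Nat.eqb (lhead N l) (ltail N i) then nk1 N nprobe X k l else 0))).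
  { rewrite <- sumR_swap. apply sumR_ext. intros l _. unfold n1.
    destruct (Nat.eqb (lhead N l) (ltail N i)); auto. rewrite sumR_zero; auto. }
  pose proof HN as HN'. destruct HN' as [Hac [HK [HSm [Hsrc [Hpar [Hcov Huniq]]]]]].
  destruct (isRoot N i) eqn:ER.
  - apply isRoot_spec in ER. destruct ER as [k0 [Hk0 E0]]. apply sumR_zero. intros k Hk.
    rewrite inner by auto. destruct (excluded_middle_informative _) as [[Hin Hne]|]; auto.
    exfalso. subst i. pose proof (Huniq k0 k Hk0 Hk Hin). subst. auto.
  - assert (Hnr : forall k, (k < K N)%nat -> S N k <> i).
    { intros k Hk E. assert (isRoot N i = true) by (apply isRoot_spec; eauto). congruence. }
    unfold n1, n0. rewrite <- sumR_plus. apply sumR_ext. intros k Hk.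
    rewrite inner by auto. unfold nk0, nk1 at 2 3.
    destruct (excluded_middle_informative (inE N k i)) as [Hin|Hin].
    + destruct (excluded_middle_informative _) as [_|C]; [|exfalso; apply C; split; auto; intro E; apply (Hnr k Hk); auto].
      destruct (Nat.eqb_spec i (S N k)) as [E|E]; [exfalso; apply (Hnr k Hk); auto|].
      unfold nk1 at 3. destruct (excluded_middle_informative (inE N k i)); [ring|contradiction].
    + destruct (excluded_middle_informative _) as [[C _]|_]; [contradiction|]. ring. Qed.

Definition Dtot N nprobe X xi i :=
  (- n1 N nprobe X i / (1 - xi i) + n0 N nprobe X i / xi i)
  + (Qv N xi i / (1 - xi i * Qv N xi i)) * (if isRoot N i then 0 else n1 N nprobe X i + n0 N nprobe X i).

Lemma deriv_total N nprobe X xi i : valid_net N -> InXi N xi -> (i < m N)%nat ->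
  is_derive (fun x => loglik N nprobe X (upd xi i x)) (xi i) (Dtot N nprobe X xi i).
Proof. intros HN Hxi Hi.
  assert (E : sumR (m N) (dterm N nprobe X xi i) = Dtot N nprobe X xi i).
  { unfold dterm, Dtot. rewrite sumR_plus.
    rewrite (sumR_delta (m N) i (fun _ => - n1 N nprobe X i / (1 - xi i) + n0 N nprobe X i / xi i)) by auto.
    rewrite <- A_formula by auto. rewrite <- sumR_scal. f_equal. apply sumR_ext. intros l _.
    destruct (Nat.eqb (lhead N l) (ltail N i)); ring. }
  rewrite <- E. apply (is_derive_ext (fun y => sumR (m N) (fun l => term N nprobe X (upd xi i y) l))).
  { intros t. reflexivity. }
  apply is_derive_sumR. intros l Hl. apply term_der; auto. Qed.

Lemma alg_gen D Rr E d1 T : d1 <> 0 -> T <> 0 -> D = E / d1 -> Rr = - E / T -> (D = 0 <-> Rr = 0).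
Proof. intros H1 H2 H3 H4. subst. split; intros H.
  - assert (HE : E = (E/d1)*d1) by (field; auto). rewrite H, Rmult_0_l in HE. subst. field; auto.
  - assert (HE : E = -((-E/T)*T)) by (field; auto). rewrite H, Rmult_0_l in HE. rewrite HE. field; auto. Qed.

Lemma alg_i N nprobe X xi i : InXi N xi -> (i < m N)%nat -> n1 N nprobe X i + n0 N nprobe X i > 0 ->
  (Dtot N nprobe X xi i = 0 <->
   xi i = (1 - rr N nprobe X i) + rr N nprobe X i * (if isRoot N i then 0 else 1) * prodB N xi i).
Proof. intros Hxi Hi HT. rewrite prodB_Qv by auto. unfold Dtot, rr.
  destruct (Hxi i Hi) as [[Hx0 Hx1] _]. destruct (Qv_bounds N xi i Hxi) as [Hq0 Hq1].
  assert (xi i * Qv N xi i <= xi i * 1) by (apply Rmult_le_compat_l; lra).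
  set (a := n1 N nprobe X i) in *. set (b := n0 N nprobe X i) in *. set (x := xi i) in *. set (q := Qv N xi i) in *.
  assert (Hr : forall u v : R, u = v <-> u - v = 0) by (intros; split; intros; lra).
  rewrite (Hr x). destruct (isRoot N i).
  - apply (alg_gen _ _ ((a+b)*(1-x) - a) (x*(1-x)) (a+b)).
    + apply Rmult_integral_contrapositive; split; lra.
    + lra.
    + field. lra.
    + field. lra.
  - apply (alg_gen _ _ ((a+b)*(1-x) - a*(1-x*q)) (x*(1-x)*(1-x*q)) (a+b)).
    + repeat (apply Rmult_integral_contrapositive; split); lra.
    + lra.
    + field. repeat split; lra.
    + field. lra. Qed.

Theorem mainTheorem6 (N : Net) (HN : valid_net N)
  (nprobe : nat -> nat) (X : nat -> nat -> nat -> bool) (xi : nat -> R)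
  (Hpos : forall i, (i < m N)%nat -> n1 N nprobe X i + n0 N nprobe X i > 0)
  (Hxi : InXi N xi) :
  (stationary N nprobe X xi <->
     forall i, (i < m N)%nat ->
       xi i = (1 - rr N nprobe X i)
              + rr N nprobe X i * (if isRoot N i then 0 else 1) * prodB N xi i)
  /\
  (stationary N nprobe X xi ->
     (forall k, (k < K N)%nat -> xi (S N k) = 1 - rr N nprobe X (S N k)) /\
     (forall i, (i < m N)%nat -> isRoot N i = false ->
        prodB N xi i =
        prodR (m N) (fun j => if Nat.eqb (ltail N j) (ltail N i)
                              then (1 - rr N nprobe X j) + rr N nprobe X j * prodB N xi i
                              else 1))).
Proof.
  assert (P1 : stationary N nprobe X xi <->
     forall i, (i < m N)%nat ->
       xi i = (1 - rr N nprobe X i)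
              + rr N nprobe X i * (if isRoot N i then 0 else 1) * prodB N xi i).
  { split.
    - intros Hs i Hi. apply alg_i; auto.
      pose proof (deriv_total N nprobe X xi i HN Hxi Hi) as D1.
      pose proof (proj2 (is_derive_Reals _ _ _) (Hs i Hi)) as D2.
      apply is_derive_unique in D1. apply is_derive_unique in D2. rewrite <- D1. exact D2.
    - intros H i Hi. apply is_derive_Reals.
      pose proof (deriv_total N nprobe X xi i HN Hxi Hi) as D1.
      apply (alg_i N nprobe X xi i Hxi Hi (Hpos i Hi)) in H; auto. rewrite H in D1. exact D1. }
  split; [exact P1|]. intros Hs. pose proof (proj1 P1 Hs) as H.
  pose proof HN as HN'. destruct HN' as [Hac [HK [HSm [Hsrc [Hpar [Hcov Huniq]]]]]].
  split.
  - intros k Hk. rewrite (H (S N k)) at 1 by auto.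
    assert (E : isRoot N (S N k) = true) by (apply isRoot_spec; eauto). rewrite E. ring.
  - intros i Hi Hr. unfold prodB at 1. apply prodR_ext. intros j Hj.
    destruct (Nat.eqb_spec (ltail N j) (ltail N i)) as [E|E]; auto.
    rewrite (H j Hj) at 1.
    assert (Ej : isRoot N j = false).
    { apply Bool.not_true_iff_false. intros C. apply isRoot_spec in C. destruct C as [k [Hk Ek]].
      destruct (Hcov i Hi) as [k' [Hk' Hin]].
      assert (Hne : i <> S N k').
      { intros Ei. assert (isRoot N i = true) by (apply isRoot_spec; eauto). congruence. }
      destruct (Hpar k' i Hk' Hin Hne) as [[Hpm [Hph _]] _].
      apply (Hsrc k (par N k' i) Hk Hpm). rewrite Hph, Ek. auto. }
    rewrite Ej. assert (prodB N xi j = prodB N xi i).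
    { unfold prodB. rewrite E. reflexivity. }
    rewrite H0. ring.
Qed.
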